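(* Let $\mathcal{R}$ be the hyperfinite $II_1$ factor with normalized trace $\tau$, realized as the weak closure of the increasing union $\bigcup_{j\ge0} M_{2^j}(\mathbb{C})$; let $P_n$ be the orthogonal projection of $L^2(\mathcal{R},\tau)$ onto $M_{2^n}(\mathbb{C})$ and $Q_n=I-P_n$. Let $(\mathcal{E},D(\mathcal{E}))$ be a Dirichlet form on $L^2(\mathcal{R},\tau)$ with $D(\mathcal{E})\supseteq \bigcup_{j\ge0}M_{2^j}(\mathbb{C})$, and set $\mathcal{E}_n(a)=\mathcal{E}(P_na)$. Then the following are equivalent: (1) $\lim_{n\to\infty}\mathcal{E}_n(a)=\mathcal{E}(a)$ for all $a\in D(\mathcal{E})$; (2) $\lim_{n\to\infty}\mathcal{E}(Q_na)=0$ for all $a\in D(\mathcal{E})$.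
   Context: $M_{2^n}(\mathbb{C})$ is embedded in $M_{2^{n+1}}(\mathbb{C})$ via $a\mapsto \mathrm{diag}(a,a)$. $L^2(\mathcal{R},\tau)$ is the completion of $\mathcal{R}$ in $\|a\|_2=\tau(a^*a)^{1/2}$; $J$ is the antilinear isometry extending $a\mapsto a^*$; $L^2_+$ is the closure of the positive elements of $\mathcal{R}$; for real ($J$-invariant) $a$, $a\wedge1$ is the Hilbert projection of $a$ onto the $L^2$-closure of $\{b\in L^2_+: b\le 1\}$. A Dirichlet form is a closed, densely defined, nonnegative quadratic form on $L^2(\mathcal{R},\tau)$ that is real ($D(\mathcal{E})$ is $J$-invariant and $\mathcal{E}(Ja)=\mathcal{E}(a)$) and satisfies $\mathcal{E}(a\wedge1)\le\mathcal{E}(a)$ for real $a\in D(\mathcal{E})$. *)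

(* Defs.v *)
From HB Require Import structures.
From mathcomp Require Import all_boot all_order all_algebra.
From mathcomp Require Import reals complex.
From mathcomp Require Import all_classical topology normedtype.
Set Implicit Arguments. Unset Strict Implicit. Unset Printing Implicit Defensive.
Import Order.TTheory GRing.Theory Num.Theory.
Local Open Scope ring_scope.

Lemma dup_size (n : nat) : (2 ^ n + 2 ^ n = 2 ^ n.+1)%N.
Proof. by rewrite expnS mul2n addnn. Qed.

Section Tower.
Variable R : realType.
Local Notation C := R[i].

Definition mx_adj (m : nat) (a : 'M[C]_m) : 'M[C]_m := (map_mx Num.conj a)^T.

Definition ntr (n : nat) (a : 'M[C]_(2 ^ n)) : C := \tr a / (2 ^ n)%:R.

Definition dup (n : nat) (a : 'M[C]_(2 ^ n)) : 'M[C]_(2 ^ n.+1) :=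
  castmx (dup_size n, dup_size n) (block_mx a 0 0 a).

Definition pos_mx (m : nat) (a : 'M[C]_m) : Prop :=
  exists b : 'M[C]_m, a = mx_adj b *m b.
End Tower.

(* A model of L^2(R, tau): a complex Hilbert space together with an     *)
(* isometric (w.r.t. <a,b> = tau(a^* b)) compatible embedding of every *)
(* M_{2^n}(C), whose union is dense.  Such a space is the completion of *)
(* the union in ||a||_2 = tau(a^*a)^{1/2}, and is unique up to a        *)
(* unitary intertwining the embeddings.  J is the antilinear isometry   *)
(* extending a |-> a^* (uniquely determined by the axioms below).       *)
(* The inner product is conjugate-linear in the first variable.        *)

Record hyperfinite_L2 (R : realType) := HyperfiniteL2 {
  L2 : lmodType R[i];
  ip : L2 -> L2 -> R[i];
  ip_linear : forall (x y z : L2) (l : R[i]),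
      ip x (l *: y + z) = l * ip x y + ip x z;
  ip_herm : forall x y : L2, ip y x = (ip x y)^*;
  ip_pos : forall x : L2, x != 0 -> 0 < ip x x;
  ip_complete : forall u : nat -> L2,
      (forall e : R, 0 < e -> exists N, forall m n, (N <= m)%N -> (N <= n)%N ->
          complex.Re (ip (u m - u n) (u m - u n)) < e) ->
      exists l : L2, forall e : R, 0 < e -> exists N, forall n, (N <= n)%N ->
          complex.Re (ip (u n - l) (u n - l)) < e;
  emb : forall n : nat, 'M[R[i]]_(2 ^ n) -> L2;
  emb_linear : forall n (l : R[i]) (a b : 'M[R[i]]_(2 ^ n)),
      emb (l *: a + b) = l *: emb a + emb b;
  emb_dup : forall n (a : 'M[R[i]]_(2 ^ n)), emb (dup a) = emb a;
  emb_ip : forall n (a b : 'M[R[i]]_(2 ^ n)),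
      ip (emb a) (emb b) = ntr (mx_adj a *m b);
  emb_dense : forall (h : L2) (e : R), 0 < e ->
      exists n (a : 'M[R[i]]_(2 ^ n)),
        complex.Re (ip (h - emb a) (h - emb a)) < e;
  J : L2 -> L2;
  J_antilinear : forall (x y : L2) (l : R[i]), J (l *: x + y) = l^* *: J x + J y;
  J_isometry : forall x : L2, ip (J x) (J x) = ip x x;
  J_emb : forall n (a : 'M[R[i]]_(2 ^ n)), J (emb a) = emb (mx_adj a)
}.

Section Forms.
Variables (R : realType) (M : hyperfinite_L2 R).
Local Notation H := (L2 M).
Local Notation C := R[i].

Definition nsq (x : H) : R := complex.Re (ip x x).

Definition l2closure (S : H -> Prop) : H -> Prop :=
  fun h => forall e : R, 0 < e -> exists s, S s /\ nsq (h - s) < e.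

Definition level (n : nat) : H -> Prop :=
  fun h => exists a : 'M[C]_(2 ^ n), h = emb M a.

Definition is_orth_proj (n : nat) (P : H -> H) : Prop :=
  forall h : H, level n (P h) /\
    forall a : 'M[C]_(2 ^ n), ip (emb M a) (h - P h) = 0.

Definition L2plus : H -> Prop :=
  l2closure (fun h => exists n (a : 'M[C]_(2 ^ n)), pos_mx a /\ h = emb M a).

(* the L^2-closure of {b in L^2_+ : b <= 1}, i.e. of the positive contractions
   (by Kaplansky density it is the closure of the positive
   contractions of the union of the matrix algebras) *)
Definition unit_interval : H -> Prop :=
  l2closure (fun h => exists n (a : 'M[C]_(2 ^ n)),
                 pos_mx a /\ pos_mx (1%:M - a) /\ h = emb M a).

(* c = a /\ 1 : Hilbert projection of a onto unit_interval *)
Definition is_wedge1 (a c : H) : Prop :=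
  unit_interval c /\ forall b, unit_interval b -> nsq (a - c) <= nsq (a - b).

Definition real_elt (a : H) : Prop := @J _ M a = a.

Definition is_quadratic_form (D : H -> Prop) (E : H -> R) : Prop :=
  [/\ D 0,
      (forall (l : C) x y, D x -> D y -> D (l *: x + y)) &
      exists B : H -> H -> C,
        [/\ forall (l : C) x y z, D x -> D y -> D z ->
              B x (l *: y + z) = l * B x y + B x z,
            forall x y, D x -> D y -> B y x = (B x y)^* &
            forall x, D x -> (E x)%:C%C = B x x]].

Definition nonneg_form (D : H -> Prop) (E : H -> R) : Prop :=
  forall x, D x -> 0 <= E x.

Definition densely_defined (D : H -> Prop) : Prop :=
  forall (h : H) (e : R), 0 < e -> exists x, D x /\ nsq (h - x) < e.

Definition closed_form (D : H -> Prop) (E : H -> R) : Prop :=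
  forall u : nat -> H, (forall n, D (u n)) ->
    (forall e : R, 0 < e -> exists N, forall m n, (N <= m)%N -> (N <= n)%N ->
        E (u m - u n) + nsq (u m - u n) < e) ->
    exists a, D a /\ forall e : R, 0 < e -> exists N, forall n, (N <= n)%N ->
        E (u n - a) + nsq (u n - a) < e.

Definition real_form (D : H -> Prop) (E : H -> R) : Prop :=
  forall a, D a -> D (@J _ M a) /\ E (@J _ M a) = E a.

Definition markovian (D : H -> Prop) (E : H -> R) : Prop :=
  forall a c, D a -> real_elt a -> is_wedge1 a c -> D c /\ E c <= E a.

Definition dirichlet_form (D : H -> Prop) (E : H -> R) : Prop :=
  [/\ is_quadratic_form D E, nonneg_form D E, densely_defined D,
      closed_form D E & real_form D E /\ markovian D E].
End Forms.

(* Main.v *)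
Require Import Defs.
From HB Require Import structures.
From mathcomp Require Import all_boot all_order all_algebra.
From mathcomp Require Import reals complex.
From mathcomp Require Import all_classical topology normedtype.
From mathcomp Require Import ring lra.
Import Order.TTheory GRing.Theory Num.Theory.
Import numFieldTopology.Exports numFieldNormedType.Exports.
Local Open Scope ring_scope.
Local Open Scope classical_set_scope.

Section Cx.
Variable R : realType.
Lemma ReJ (z : R[i]) : complex.Re (z^*) = complex.Re z.
Proof. by case: z. Qed.
Lemma ReM (t : R) (z : R[i]) : complex.Re (t%:C%C * z) = t * complex.Re z.
Proof. case: z => a b /=. by rewrite !mul0r subr0. Qed.
Lemma ReD (z w : R[i]) : complex.Re (z + w) = complex.Re z + complex.Re w.
Proof. by case: z; case: w. Qed.
Lemma ReC (t : R) : complex.Re (t%:C%C) = t.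
Proof. by []. Qed.
Lemma Re0 : complex.Re (0 : R[i]) = 0.
Proof. by []. Qed.
Lemma Re_gt0 (z : R[i]) : 0 < z -> 0 < complex.Re z.
Proof. by rewrite ltcE => /andP[]. Qed.
End Cx.

Section RF.
Set Implicit Arguments.
Unset Strict Implicit.
Variables (R : realType) (V : lmodType R[i]).

Record rform (D : V -> Prop) (q : V -> V -> R) : Prop := RForm {
  rf_D0 : D 0;
  rf_Dlin : forall (l : R[i]) x y, D x -> D y -> D (l *: x + y);
  rf_addr : forall x y z, D x -> D y -> D z -> q x (y + z) = q x y + q x z;
  rf_scaler : forall (t : R) x y, D x -> D y -> q x (t%:C%C *: y) = t * q x y;
  rf_sym : forall x y, D x -> D y -> q x y = q y x;
  rf_pos : forall x, D x -> 0 <= q x x }.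

Definition ee (q : V -> V -> R) x := q x x.

Section Theory.
Variables (D : V -> Prop) (q : V -> V -> R) (F : rform D q).

Lemma DD x y : D x -> D y -> D (x + y).
Proof. by move=> Dx Dy; have := rf_Dlin F 1 Dx Dy; rewrite scale1r. Qed.
Lemma DZ l x : D x -> D (l *: x).
Proof. by move=> Dx; have := rf_Dlin F l Dx (rf_D0 F); rewrite addr0. Qed.
Lemma DN x : D x -> D (- x).
Proof. by move=> Dx; rewrite -scaleN1r; apply: DZ. Qed.
Lemma DB x y : D x -> D y -> D (x - y).
Proof. by move=> Dx Dy; apply: DD => //; apply: DN. Qed.

Lemma q0r x : D x -> q x 0 = 0.
Proof.
move=> Dx; have := rf_addr F Dx (rf_D0 F) (rf_D0 F); rewrite addr0 => h. lra.
Qed.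
Lemma qNr x y : D x -> D y -> q x (- y) = - q x y.
Proof.
move=> Dx Dy; have := rf_addr F Dx Dy (DN Dy); rewrite subrr q0r // => h. lra.
Qed.
Lemma qBr x y z : D x -> D y -> D z -> q x (y - z) = q x y - q x z.
Proof. by move=> Dx Dy Dz; rewrite (rf_addr F) //; [rewrite qNr | apply: DN]. Qed.
Lemma qaddl x y z : D x -> D y -> D z -> q (x + y) z = q x z + q y z.
Proof. by move=> Dx Dy Dz; rewrite (rf_sym F (DD Dx Dy) Dz) (rf_addr F Dz Dx Dy) (rf_sym F Dz Dx) (rf_sym F Dz Dy). Qed.
Lemma qNl x y : D x -> D y -> q (- x) y = - q x y.
Proof. by move=> Dx Dy; rewrite (rf_sym F (DN Dx) Dy) (qNr Dy Dx) (rf_sym F Dx Dy). Qed.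
Lemma qBl x y z : D x -> D y -> D z -> q (x - y) z = q x z - q y z.
Proof. by move=> Dx Dy Dz; rewrite qaddl ?qNl //; apply: DN. Qed.
Lemma qscalel t x y : D x -> D y -> q (t%:C%C *: x) y = t * q x y.
Proof. by move=> Dx Dy; rewrite (rf_sym F (DZ _ Dx) Dy) (rf_scaler F t Dy Dx) (rf_sym F Dy Dx). Qed.

Lemma eD x y : D x -> D y -> ee q (x + y) = ee q x + ee q y + 2 * q x y.
Proof.
move=> Dx Dy; rewrite /ee (qaddl Dx Dy (DD Dx Dy)) (rf_addr F Dx Dx Dy).
rewrite (rf_addr F Dy Dx Dy) (rf_sym F Dy Dx). lra.
Qed.
Lemma eN x : D x -> ee q (- x) = ee q x.
Proof. by move=> Dx; rewrite /ee (qNl Dx (DN Dx)) (qNr Dx Dx) opprK. Qed.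
Lemma eB x y : D x -> D y -> ee q (x - y) = ee q x + ee q y - 2 * q x y.
Proof. by move=> Dx Dy; rewrite (eD Dx (DN Dy)) (eN Dy) (qNr Dx Dy); lra. Qed.
Lemma eZ t x : D x -> ee q (t%:C%C *: x) = t * t * ee q x.
Proof. by move=> Dx; rewrite /ee (qscalel t Dx (DZ _ Dx)) (rf_scaler F t Dx Dx) mulrA. Qed.
Lemma e_ge0 x : D x -> 0 <= ee q x.
Proof. exact: rf_pos. Qed.
Lemma eBsym x y : D x -> D y -> ee q (x - y) = ee q (y - x).
Proof. by move=> Dx Dy; rewrite -(eN (DB Dx Dy)) opprB. Qed.

Lemma cs t x y : D x -> D y -> 0 < t -> 2 * q x y <= t * ee q x + ee q y / t.
Proof.
move=> Dx Dy t0.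
have h := e_ge0 (DB (DZ t%:C%C Dx) Dy).
rewrite (eB (DZ _ Dx) Dy) (eZ t Dx) (qscalel t Dx Dy) in h.
rewrite -(ler_pM2l t0) mulrDr [t * (_ / t)]mulrC divfK ?gt_eqF //.
lra.
Qed.

Lemma cs2 t x y : D x -> D y -> 0 < t ->
  - (t * ee q x + ee q y / t) <= 2 * q x y.
Proof.
move=> Dx Dy t0; have := cs Dx (DN Dy) t0; rewrite qNr // eN //; lra.
Qed.

Lemma e_par x y : D x -> D y -> ee q (x + y) = 2 * ee q x + 2 * ee q y - ee q (x - y).
Proof. by move=> Dx Dy; rewrite eD // eB //; lra. Qed.

Lemma e_sub_le x y : D x -> D y -> ee q (x - y) <= 2 * ee q x + 2 * ee q y.
Proof.
move=> Dx Dy; have := e_ge0 (DD Dx Dy); rewrite e_par //; lra.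
Qed.

Lemma e_cont x eps : D x -> 0 < eps -> exists2 d, 0 < d &
  forall w, D w -> ee q w < d -> `|ee q (x + w) - ee q x| < eps.
Proof.
move=> Dx e0.
have ex0 := e_ge0 Dx.
set t := eps / (2 * (ee q x + 1)).
have t0 : 0 < t by rewrite divr_gt0 // mulr_gt0 //; lra.
have tex : t * ee q x <= eps / 2.
  have -> : eps / 2 = t * (ee q x + 1).
    rewrite /t; field.
    by rewrite gt_eqF //; lra.
  rewrite ler_pM2l //; lra.
exists (Num.min (eps / 4) (t * eps / 4)).
  have te : 0 < t * eps by apply: mulr_gt0.
  rewrite lt_min; apply/andP; split; lra.
move=> w Dw; rewrite lt_min => /andP[w1 w2].
have w3 : ee q w / t < eps / 4.
  by rewrite ltr_pdivrMr //; lra.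
have c1 := cs Dx Dw t0; have c2 := cs2 Dx Dw t0.
have ew := e_ge0 Dw.
rewrite eD // ltr_norml; apply/andP; split; lra.
Qed.

End Theory.
End RF.

Section LSC.
Variables (R : realType) (V : lmodType R[i]) (D : V -> Prop) (q p : V -> V -> R).
Hypotheses (Fq : rform D q) (Fp : rform (fun _ => True) p).
Hypothesis Hdef : forall x, ee p x <= 0 -> x = 0.
Hypothesis Hcl : forall u : nat -> V, (forall k, D (u k)) ->
  (forall eps, 0 < eps -> exists N, forall m n, (N <= m)%N -> (N <= n)%N ->
      ee q (u m - u n) + ee p (u m - u n) < eps) ->
  exists a, D a /\ forall eps, 0 < eps -> exists N, forall n, (N <= n)%N ->
      ee q (u n - a) + ee p (u n - a) < eps.

Lemma half_twice (y : V) : (2^-1)%:C%C *: (y + y) = y.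
Proof.
rewrite scalerDr -scalerDl.
have -> : ((2^-1)%:C%C + (2^-1)%:C%C = 1 :> R[i]).
  by apply/eqP; rewrite eq_complex /=; apply/andP; split; apply/eqP; lra.
by rewrite scale1r.
Qed.

Lemma lsc (y : V) (L : R) (yk : nat -> V) :
  (forall k, D (yk k)) -> (forall k, ee q (yk k) <= L) ->
  (forall eps, 0 < eps -> exists N, forall k, (N <= k)%N -> ee p (yk k - y) < eps) ->
  ee q y <= L.
Proof.
move=> Dy Ly cy.
pose r (k : nat) : R := (k.+1%:R)^-1.
have r0 k : 0 < r k by rewrite /r invr_gt0 ltr0n.
have rdec k l : (k <= l)%N -> r l <= r k.
  by move=> kl; rewrite /r lef_pV2 ?posrE ?ltr0n // ler_nat ltnS.
have rsmall eps : 0 < eps -> exists N, r N < eps.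
  by move=> e0; have [k] := ltr_add_invr e0; rewrite add0r => h; exists k.
pose C k z := D z /\ ee q z <= L /\ ee p (z - y) <= r k.
pose S k := [set v | exists z, C k z /\ v = ee q z].
have Sne k : S k !=set0.
  have [N HN] := cy _ (r0 k).
  exists (ee q (yk N)), (yk N); split => //; split; first exact: Dy.
  by split; [exact: Ly | apply: ltW; apply: HN].
have Slb k : has_lbound (S k).
  by exists 0 => v [z [[Dz _] ->]]; exact (e_ge0 Fq Dz).
pose d k := inf (S k).
have dle k z : C k z -> d k <= ee q z.
  by move=> Cz; apply: (ge_inf (Slb k)); exists z.
have dL k : d k <= L.
  have [v [z [Cz _]]] := Sne k.
  apply: le_trans (dle _ _ Cz) _; by case: Cz => _ [].
have dmono k l : (k <= l)%N -> d k <= d l.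
  move=> kl; apply: lb_le_inf (Sne l) _ => v [z [[Dz [Lz rz]] ->]].
  apply: dle; split => //; split => //; exact: le_trans rz (rdec _ _ kl).
pose T := [set v | exists k, v = d k].
have Tsup : has_sup T.
  split; first by exists (d 0%N), 0%N.
  by exists L => v [k ->]; exact: dL.
pose s := sup T.
have ds k : d k <= s by apply: sup_upper_bound Tsup _ _; exists k.
have sd eps : 0 < eps -> exists N, s - eps < d N.
  by move=> e0; have [v [k ->] lt] := sup_adherent e0 Tsup; exists k.
have : forall k, exists z, C k z /\ ee q z < d k + r k.
  move=> k; have [v [z [Cz ->]] lt] := inf_adherent (r0 k) (conj (Sne k) (Slb k)).
  by exists z.
move/choice => [z Hz].
have Dz k : D (z k) by case: (Hz k) => [[]].
have zL k : ee q (z k) <= L by case: (Hz k) => [[_ []]].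
have zr k : ee p (z k - y) <= r k by case: (Hz k) => [[_ []]].
have zd k : ee q (z k) < d k + r k by case: (Hz k).
have [a [Da ca]] : exists a, D a /\ forall eps, 0 < eps -> exists N, forall n, (N <= n)%N ->
      ee q (z n - a) + ee p (z n - a) < eps.
  apply: Hcl => // eps e0.
  have [N1 HN1] := rsmall (eps / 16) ltac:(lra).
  have [N2 HN2] := sd (eps / 4) ltac:(lra).
  pose N := maxn N1 N2.
  have key k l : (N <= k)%N -> (k <= l)%N ->
      ee q (z k - z l) + ee p (z k - z l) < eps.
    move=> Nk kl.
    have N1k : (N1 <= k)%N by apply: leq_trans Nk; apply: leq_maxl.
    have N2k : (N2 <= k)%N by apply: leq_trans Nk; apply: leq_maxr.
    have rk := rdec _ _ N1k; have rl := rdec _ _ (leq_trans N1k kl).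
    have rkl := rdec _ _ kl.
    have dk := dmono _ _ N2k.
    set mid := (2^-1)%:C%C *: (z k + z l).
    have Dmid : D mid := DZ Fq _ (DD Fq (Dz k) (Dz l)).
    have emid : ee q mid = 2^-1 * 2^-1 * ee q (z k + z l) by rewrite (eZ Fq _ (DD Fq (Dz k) (Dz l))).
    have pzz := e_par Fq (Dz k) (Dz l).
    have eq0 := e_ge0 Fq (DB Fq (Dz k) (Dz l)).
    have Cmid : C k mid.
      split => //; split.
        rewrite emid pzz; have := zL k; have := zL l; lra.
      have -> : mid - y = (2^-1)%:C%C *: ((z k - y) + (z l - y)).
        by rewrite /mid -{1}(half_twice y) -scalerBr opprD addrACA.
      rewrite (eZ Fp _ (x := z k - y + (z l - y)) I).
      rewrite (e_par Fp (x := z k - y) (y := z l - y) I I).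
      have := e_ge0 Fp (x := z k - y - (z l - y)) I.
      have := zr k; have := zr l; lra.
    have dmid := dle _ _ Cmid.
    have pp : ee p (z k - z l) <= 2 * ee p (z k - y) + 2 * ee p (z l - y).
      have := e_sub_le Fp (x := z k - y) (y := z l - y) I I.
      by rewrite opprB addrA subrK.
    have := zr k; have := zr l; have := zd k; have := zd l; have := ds l.
    move: emid pzz; lra.
  exists N => m n Hm Hn.
  case/orP: (leq_total m n) => mn; first exact: key.
  rewrite (eBsym Fq (Dz m) (Dz n)) (eBsym Fp (x := z m) (y := z n) I I).
  exact: key.
have ay : a = y.
  apply/eqP; rewrite -subr_eq0; apply/eqP; apply: Hdef.
  apply/ler_addgt0Pr => eps e0; rewrite add0r.
  have [N1 HN1] := ca (eps / 4) ltac:(lra).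
  have [N2 HN2] := rsmall (eps / 4) ltac:(lra).
  pose k := maxn N1 N2.
  have h1 := HN1 k (leq_maxl _ _).
  have h2 := rdec _ _ (leq_maxr N1 N2 : (N2 <= k)%N).
  have h3 := e_ge0 Fq (DB Fq (Dz k) Da).
  have := e_sub_le Fp (x := z k - y) (y := z k - a) I I.
  have -> : z k - y - (z k - a) = a - y by rewrite opprB [LHS]addrC addrA subrK.
  have := zr k; lra.
subst a.
apply/ler_addgt0Pr => eps e0.
have [del del0 Hdel] := e_cont Fq Da e0.
have [N HN] := ca del del0.
have h1 := HN N (leqnn N).
have h3 := e_ge0 Fp (x := z N - y) I.
have h4 : ee q (z N - y) < del by lra.
have := Hdel (z N - y) (DB Fq (Dz N) Da) h4.
rewrite [y + _]addrC subrK ltr_norml => /andP[h5 _].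
have := zL N; lra.
Qed.
End LSC.

Lemma cvgE (R : realType) (f : nat -> R) l :
  f @ \oo --> l <-> forall e, 0 < e -> exists N, forall n, (N <= n)%N -> `|f n - l| < e.
Proof.
split.
- move/cvgrPdist_lt => H e He. have [N _ HN] := H e He.
  exists N => n Hn. rewrite distrC. exact: HN.
- move=> H; apply/cvgrPdist_lt => e He. have [N HN] := H e He.
  exists N => // n Hn. rewrite distrC. exact: HN.
Qed.

Section Hyp.
Set Implicit Arguments.
Unset Strict Implicit.
Variables (R : realType) (M : hyperfinite_L2 R).
Local Notation H := (L2 M).

Definition pip (x y : H) : R := complex.Re (ip x y).

Lemma ip0r (x : H) : ip x 0 = 0.
Proof.
have h := ip_linear x 0 0 1; rewrite scale1r addr0 mul1r in h.
have h' : ip x 0 + ip x 0 = ip x 0 + 0 by rewrite addr0 -h.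
exact (addrI _ h').
Qed.

Lemma pip_form : rform (fun _ : H => True) pip.
Proof.
split => //.
- move=> x y z _ _ _; rewrite /pip.
  by have := ip_linear x y z 1; rewrite scale1r mul1r => ->; rewrite ReD.
- move=> t x y _ _; rewrite /pip.
  by have := ip_linear x y 0 t%:C%C; rewrite !addr0 ip0r addr0 => ->; case: (ip x y) => a b /=; rewrite !mul0r subr0.
- by move=> x y _ _; rewrite /pip (ip_herm x y) ReJ.
- move=> x _; rewrite /pip; have [->|nx] := eqVneq x 0; first by rewrite ip0r.
  by apply: ltW; apply: Re_gt0; apply: ip_pos.
Qed.

Lemma pip_def (x : H) : ee pip x <= 0 -> x = 0.
Proof.
move=> h; apply/eqP; apply: contraTT h => nx.
by rewrite -ltNge; apply: Re_gt0; apply: ip_pos.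
Qed.

Lemma emb_sub n (a b : 'M[R[i]]_(2 ^ n)) : emb M (a - b) = emb M a - emb M b.
Proof.
have := emb_linear M (-1) b a; rewrite !scaleN1r => h.
by rewrite [a - b]addrC h addrC.
Qed.

Lemma level_mono k n (h : H) : (k <= n)%N -> level k h -> level n h.
Proof.
elim: n => [|n IH] kn.
  by move: kn; rewrite leqn0 => /eqP ->.
move: kn; rewrite leq_eqVlt => /orP[/eqP -> //|]; rewrite ltnS => kn lk.
have [a ->] := IH kn lk.
by exists (dup a); rewrite emb_dup.
Qed.

Lemma best n (Pn : H -> H) (HP : is_orth_proj n Pn) (h b : H) :
  level n b -> nsq (h - Pn h) <= nsq (h - b).
Proof.
move=> [c2 ->].
have [[c1 e1] orth] := HP h.
have -> : h - emb M c2 = (h - Pn h) + emb M (c1 - c2).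
  by rewrite emb_sub -e1 addrA subrK.
rewrite /nsq -/(pip _ _) -/(pip _ _) -/(ee pip _) -/(ee pip _).
rewrite (eD pip_form (x := h - Pn h) (y := emb M (c1 - c2)) I I).
have -> : pip (h - Pn h) (emb M (c1 - c2)) = 0.
  by rewrite /pip (ip_herm (emb M (c1 - c2))) orth ReJ.
have := e_ge0 pip_form (x := emb M (c1 - c2)) I.
lra.
Qed.

Lemma approx (P : nat -> H -> H) (HP : forall n, is_orth_proj n (P n)) (h : H) eps :
  0 < eps -> exists N, forall n, (N <= n)%N -> nsq (h - P n h) < eps.
Proof.
move=> e0; have [k [a ha]] := emb_dense h e0.
exists k => n kn.
have hb : level n (emb M a) := level_mono kn (ex_intro _ a erefl).
have h1 := best (HP n) h hb.
exact (le_lt_trans h1 ha).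
Qed.
End Hyp.

Theorem proposition2p3 (R : realType) (M : hyperfinite_L2 R)
    (D : L2 M -> Prop) (E : L2 M -> R) (P : nat -> L2 M -> L2 M) :
  dirichlet_form D E ->
  (forall n (a : 'M[R[i]]_(2 ^ n)), D (emb M a)) ->
  (forall n, is_orth_proj n (P n)) ->
  ((forall a, D a -> (fun n => E (P n a)) @ \oo --> E a) <->
   (forall a, D a -> (fun n => E (a - P n a)) @ \oo --> (0 : R))).
Proof.
move=> [[D0 Dlin [B [Blin Bherm BE]]] Enn Hdd Hcl [Hreal Hmark]] Hemb HP.
pose q x y := complex.Re (B x y).
have B0 x : D x -> B x 0 = 0.
  move=> Dx; have h := Blin 1 x 0 0 Dx D0 D0; rewrite scale1r addr0 mul1r in h.
  have h' : B x 0 + B x 0 = B x 0 + 0 by rewrite addr0 -h.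
  exact (addrI _ h').
have Fq : rform D q.
  split => //.
  - move=> x y z Dx Dy Dz; have := Blin 1 x y z Dx Dy Dz; rewrite scale1r mul1r /q => ->.
    by case: (B x y); case: (B x z).
  - move=> t x y Dx Dy; have := Blin t%:C%C x y 0 Dx Dy D0.
    rewrite addr0 B0 // addr0 /q => ->.
    by case: (B x y) => u v /=; rewrite !mul0r subr0.
  - by move=> x y Dx Dy; rewrite /q (Bherm x y Dx Dy); case: (B x y).
  - by move=> x Dx; rewrite /q -(BE x Dx) /=; exact: Enn.
have Eq x : D x -> E x = ee q x by move=> Dx; rewrite /ee /q -(BE x Dx).
have Fp := pip_form M.
have Hcl' : forall u : nat -> L2 M, (forall k, D (u k)) ->
  (forall eps, 0 < eps -> exists N, forall m n, (N <= m)%N -> (N <= n)%N ->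
      ee q (u m - u n) + ee (pip (M:=M)) (u m - u n) < eps) ->
  exists a, D a /\ forall eps, 0 < eps -> exists N, forall n, (N <= n)%N ->
      ee q (u n - a) + ee (pip (M:=M)) (u n - a) < eps.
  move=> u Du Hc.
  have [a [Da Ha]] := Hcl u Du (fun e e0 =>
    let: ex_intro N HN := Hc e e0 in
    ex_intro _ N (fun m n Hm Hn =>
      eq_ind_r (fun v => v + _ < e) (HN m n Hm Hn) (Eq _ (DB Fq (Du m) (Du n))))).
  exists a; split => // e e0; have [N HN] := Ha e e0; exists N => n Hn.
  rewrite -(Eq _ (DB Fq (Du n) Da)); exact (HN n Hn).
have DP n a : D (P n a) by have [[c ->] _] := HP n a; exact: Hemb.
split.
- move=> H1 a Da. apply/cvgE => eps e0.
  suff [N HN] : exists N, forall n, (N <= n)%N -> E (a - P n a) < eps.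
    exists N => n Nn /=; rewrite subr0 ger0_norm; first exact: HN.
    exact: Enn (DB Fq Da (DP n a)).
  case: (pselect (exists N, forall n, (N <= n)%N -> E (a - P n a) < eps)) => // nex.
  exfalso.
  have Hm : forall N, exists n, (N <= n)%N /\ eps <= E (a - P n a).
    move=> N; apply: contrapT => hN; apply: nex; exists N => n Nn.
    rewrite ltNge; apply/negP => hle; apply: hN; by exists n.
  have [m Hm'] := choice Hm.
  have /cvgE/(_ (eps / 4) ltac:(lra)) [N0 HN0] := H1 a Da.
  pose yk k := a + P (m (k + N0)%N) a.
  have Dyk : forall k, D (yk k) by move=> k; exact (DD Fq Da (DP _ _)).
  have Lyk : forall k, ee q (yk k) <= 4 * ee q a - eps / 2.
    move=> k; rewrite /yk (e_par Fq Da (DP _ _)).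
    have [mk1 mk2] := Hm' (k + N0)%N.
    have := HN0 (m (k + N0)%N) (leq_trans (leq_addl k N0) mk1).
    rewrite ltr_norml => /andP[h1 h2].
    rewrite -(Eq _ Da) -(Eq _ (DP _ _)) -(Eq _ (DB Fq Da (DP _ _))).
    lra.
  have cyk : forall del, 0 < del -> exists N, forall k, (N <= k)%N ->
      ee (pip (M:=M)) (yk k - (a + a)) < del.
    move=> del d0; have [N1 HN1] := approx HP a d0.
    exists N1 => k Nk.
    have [mk1 _] := Hm' (k + N0)%N.
    have -> : yk k - (a + a) = P (m (k + N0)%N) a - a.
      by rewrite /yk opprD addrACA subrr add0r.
    rewrite (eBsym Fp (x := P (m (k + N0)%N) a) (y := a) I I).
    exact (HN1 _ (leq_trans Nk (leq_trans (leq_addr N0 k) mk1))).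
  have := @lsc R (L2 M) D q (pip (M:=M)) Fq Fp (@pip_def R M) Hcl' (a + a) _ yk Dyk Lyk cyk.
  rewrite (eD Fq Da Da); change (q a a) with (ee q a); lra.
- move=> H2 a Da. apply/cvgE => eps e0.
  have [del d0 Hdel] := e_cont Fq Da e0.
  have /cvgE/(_ del d0) [N HN] := H2 a Da.
  exists N => n Nn /=.
  have := HN n Nn; rewrite /= subr0 ger0_norm; last exact: Enn (DB Fq Da (DP n a)).
  rewrite (Eq _ (DB Fq Da (DP n a))) (eBsym Fq Da (DP n a)) => h.
  have := Hdel _ (DB Fq (DP n a) Da) h.
  by rewrite [a + _]addrC subrK -!Eq.
Qed.
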